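(* Let $(X,\mathcal{A},\mu,T)$ be an ergodic probability-preserving system and let $(E_k)_{k\geq1}$ be a sequence in $\mathcal{A}$ (with $\mu(E_k)>0$, so that the hitting times below are defined). Then the following are equivalent: (a) $\mu(E_k)\to0$ as $k\to\infty$; (b) $\nu(E_k)\to0$ as $k\to\infty$ for all probability measures $\nu\ll\mu$ on $(X,\mathcal{A})$; (c) $\varphi_{E_k}\to\infty$ in $\mu$-measure as $k\to\infty$; (d) $\varphi_{E_k}\to\infty$ in $\nu$-measure as $k\to\infty$ for all probability measures $\nu\ll\mu$; (e) $\varphi_{E_k}\to\infty$ in $\nu$-measure as $k\to\infty$ for some probability measure $\nu\ll\mu$.
   Context: A measure preserving transformation $T$ of a probability space $(X,\mathcal{A},\mu)$ is a measurable map $T:X\to X$ with $\mu\circ T^{-1}=\mu$; it may be non-invertible. For $Y\in\mathcal{A}$ with $\mu(Y)>0$, the first hitting time is $\varphi_Y(x):=\min\{n\geq1: T^n x\in Y\}\in\mathbb{N}\cup\{\infty\}$. ''$\varphi_{E_k}\to\infty$ in $\nu$-measure'' means $\nu(\varphi_{E_k}\leq N)\to0$ as $k\to\infty$ for every $N\geq1$. *)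

(* Defs.v *)
From HB Require Import structures.
From mathcomp Require Import all_boot all_order all_algebra.
From mathcomp Require Import all_classical all_reals all_analysis.
Set Implicit Arguments. Unset Strict Implicit. Unset Printing Implicit Defensive.
Import Order.TTheory GRing.Theory Num.Theory.
Local Open Scope classical_set_scope.
Local Open Scope ring_scope.
Local Open Scope ereal_scope.

Definition measure_preserving d (X : measurableType d) (R : realType)
  (mu : set X -> \bar R) (T : X -> X) : Prop :=
  measurable_fun setT T /\
  forall A : set X, measurable A -> mu (T @^-1` A) = mu A.

Definition ergodic d (X : measurableType d) (R : realType)
  (mu : set X -> \bar R) (T : X -> X) : Prop :=
  forall A : set X, measurable A -> T @^-1` A = A -> mu A = 0 \/ mu A = 1.

(* The event {x | phi_Y(x) <= N}, where phi_Y(x) = min {n >= 1 | T^n x \in Y}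
   is the first hitting time of Y: some n with 1 <= n <= N has T^n x in Y. *)
Definition hit_le (X : Type) (T : X -> X) (Y : set X) (N : nat) : set X :=
  [set x | exists n : nat, (1 <= n <= N)%N /\ Y (iter n T x)].

(* "phi_{E_k} -> oo in nu-measure": nu(phi_{E_k} <= N) -> 0 for every N >= 1 *)
Definition hit_cvg_infty_in_measure d (X : measurableType d) (R : realType)
  (nu : set X -> \bar R) (T : X -> X) (E : nat -> set X) : Prop :=
  forall N : nat, (1 <= N)%N ->
    (fun k => nu (hit_le T (E k) N)) @ \oo --> 0.

(* Main.v *)
Require Import Defs.
From HB Require Import structures.
From mathcomp Require Import all_boot all_order all_algebra.
From mathcomp Require Import all_classical all_reals all_analysis.
From mathcomp Require Import ring.
Import Order.TTheory GRing.Theory Num.Theory.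
Local Open Scope classical_set_scope.
Local Open Scope ring_scope.
Local Open Scope ereal_scope.
Lemma cvg0_ge0P (R : realType) (u : nat -> \bar R) : (forall k, 0 <= u k) ->
  u @ \oo --> 0 <-> (forall e : R, (0 < e)%R -> \forall k \near \oo, u k <= e%:E).
Proof.
move=> u0; split.
- move=> /fine_cvgP [ufin /cvgrPdist_le uc] e e0.
  apply: filterS2 ufin (uc e e0) => k fk /=.
  rewrite sub0r normrN => h.
  by rewrite -(fineK fk) lee_fin (le_trans _ h)// ler_norm.
- move=> h; apply/fine_cvgP; split.
  + have := h 1%R ltr01; apply: filterS => k uk1.
    by rewrite ge0_fin_numE// (le_lt_trans uk1)// ltry.
  + apply/cvgrPdist_le => e e0.
    have := h e e0; apply: filterS => k uke /=.
    rewrite sub0r normrN.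
    have fk : u k \is a fin_num by rewrite ge0_fin_numE// (le_lt_trans uke)// ltry.
    rewrite ger0_norm ?fine_ge0//.
    by rewrite -lee_fin fineK.
Qed.

Lemma abs_cont d (X : measurableType d) (R : realType) (mu nu : probability X R) :
  nu `<< mu -> forall e : R, (0 < e)%R -> exists del : R, (0 < del)%R /\
  forall A, measurable A -> mu A < del%:E -> nu A < e%:E.
Proof.
move=> numu e e0.
have [P [N PN]] := Hahn_decomposition (charge_of_finite_measure nu).
have [r [r0 hr]] := charge_variation_continuous PN (numu : charge_of_finite_measure nu `<< mu) e0.
exists r; split => // A mA muA.
apply: le_lt_trans (hr A mA muA).
apply: le_trans (abse_charge_variation PN mA).
rewrite gee0_abs //.
Qed.

Lemma abs_cont_seq d (X : measurableType d) (R : realType) (mu nu : probability X R)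
  (F : nat -> set X) : nu `<< mu -> (forall k, measurable (F k)) ->
  (fun k => mu (F k)) @ \oo --> 0 -> (fun k => nu (F k)) @ \oo --> 0.
Proof.
move=> numu mF /cvg0_ge0P h; apply/cvg0_ge0P => // e e0.
have [r [r0 hr]] := abs_cont _ _ _ _ _ numu _ e0.
have := h (fun _ => measure_ge0 _ _) (r / 2)%R; rewrite divr_gt0// => /(_ isT).
apply: filterS => k hk; apply/ltW/hr => //.
rewrite (le_lt_trans hk)// lte_fin.
by rewrite ltr_pdivrMr// ltr_pMr// ltr1n.
Qed.
Section dyn.
Context d (X : measurableType d) (R : realType) (mu : probability X R) (T : X -> X).
Hypothesis hT : measure_preserving mu T.

Definition U (K : nat) (Z : set X) := [set x | exists j, (j < K)%N /\ Z (iter j T x)].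

Lemma pre_meas A : measurable A -> measurable (T @^-1` A).
Proof. by move=> mA; rewrite -[_ @^-1` _]setTI; apply: hT.1. Qed.

Lemma iter_meas n A : measurable A -> measurable (iter n T @^-1` A).
Proof.
elim: n A => [|n IH] A mA //.
have -> : iter n.+1 T @^-1` A = iter n T @^-1` (T @^-1` A).
  by apply/seteqP; split => x //=.
exact/IH/pre_meas.
Qed.

Lemma iter_pres n A : measurable A -> mu (iter n T @^-1` A) = mu A.
Proof.
elim: n A => [|n IH] A mA //.
have -> : iter n.+1 T @^-1` A = iter n T @^-1` (T @^-1` A).
  by apply/seteqP; split => x //=.
by rewrite IH ?hT.2//; exact: pre_meas.
Qed.

Lemma U_meas K Z : measurable Z -> measurable (U K Z).
Proof.
move=> mZ.
have -> : U K Z = \bigcup_(j in [set j | (j < K)%N]) (iter j T @^-1` Z).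
  by apply/seteqP; split => x /= [j [? ?]]; exists j.
by apply: bigcup_measurable => j _; exact: iter_meas.
Qed.

Lemma U_le K Z : measurable Z -> mu (U K Z) <= (K%:R)%:E * mu Z.
Proof.
move=> mZ; elim: K => [|K IH].
  have -> : U 0 Z = set0 by apply/seteqP; split => x // [j []].
  by rewrite measure0 mul0e.
have -> : U K.+1 Z = U K Z `|` iter K T @^-1` Z.
  apply/seteqP; split => x /=.
    move=> [j [jK Zj]]; move: jK; rewrite ltnS leq_eqVlt => /orP[/eqP <-|jK].
      by right.
    by left; exists j.
  by move=> [[j [jK Zj]]|Zx]; [exists j; split => //; apply: ltnW|exists K].
apply: (@le_trans _ _ (mu (U K Z) + mu (iter K T @^-1` Z))); first exact: (measureU2 mu (U_meas K _ mZ) (iter_meas K _ mZ)).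
rewrite (iter_pres K Z mZ) -natr1 EFinD muleDl ?mul1e ?lee_add// ?leeD2r//; exact: fin_num_measure.
Qed.

Lemma hit_le_U E N : hit_le T E N = U N (T @^-1` E).
Proof.
apply/seteqP; split => x /=.
  move=> [[|n] [/andP[n1 nN] En]] //; exists n; split => //.
by move=> [j [jN Ej]]; exists j.+1.
Qed.


Lemma key_ineq Y E N : measurable Y -> measurable E ->
  mu E <= mu (~` U N.+1 Y) + (N.+1%:R)%:E * mu (Y `&` hit_le T E N.+1).
Proof.
move=> mY mE.
have mH : measurable (Y `&` hit_le T E N.+1).
  by apply: measurableI => //; rewrite hit_le_U; apply: U_meas; exact: pre_meas.
rewrite -(iter_pres N.+1 E mE).
apply: (@le_trans _ _ (mu (~` U N.+1 Y `|` U N.+1 (Y `&` hit_le T E N.+1)))).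
  apply: le_measure; rewrite ?inE.
  - exact: iter_meas.
  - by apply: measurableU; [apply: measurableC; exact: U_meas|exact: U_meas].
  move=> x Ex; have [xV|xV] := pselect (U N.+1 Y x); last by left.
  right; move: xV => [j [jN Yj]]; exists j; split => //; split => //.
  exists (N.+1 - j)%N; split.
    by apply/andP; split; [rewrite subn_gt0|rewrite leq_subr].
  by rewrite -iterD subnK// ltnW.
apply: (@le_trans _ _ (mu (~` U N.+1 Y) + mu (U N.+1 (Y `&` hit_le T E N.+1)))).
  apply: measureU2; [apply: measurableC; exact: U_meas|exact: U_meas].
by rewrite leeD2l// U_le.
Qed.

End dyn.

Arguments U {d X} T K Z.
Arguments pre_meas {d X R mu T} hT A _.
Arguments iter_meas {d X R mu T} hT n A _.
Arguments iter_pres {d X R mu T} hT n A _.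
Arguments U_meas {d X R mu T} hT K Z _.
Arguments U_le {d X R mu T} hT K Z _.
Arguments hit_le_U {d X} T E N.
Arguments key_ineq {d X R mu T} hT Y E N _ _.

Section erg.
Context d (X : measurableType d) (R : realType) (mu : probability X R) (T : X -> X).
Hypothesis hT : measure_preserving mu T.
Hypothesis herg : ergodic mu T.

Lemma erg_W Y : measurable Y -> 0 < mu Y ->
  (fun N => mu (~` U T N.+1 Y)) @ \oo --> 0.
Proof.
move=> mY Y0.
pose C m := [set x | exists n, (m <= n)%N /\ Y (iter n T x)].
pose Binf := \bigcap_m C m.
have C_U m : C m = \bigcup_(n in [set n | (m <= n)%N]) (iter n T @^-1` Y).
  by apply/seteqP; split => x /= [n [? ?]]; exists n.
have mC m : measurable (C m).
  by rewrite C_U; apply: bigcup_measurable => n _; exact: (iter_meas hT).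
have mBinf : measurable Binf by exact: bigcapT_measurable.
have Cm m : C m = iter m T @^-1` (C 0%N).
  apply/seteqP; split => x /=.
    move=> [n [mn Yn]]; exists (n - m)%N; split => //.
    by rewrite -iterD subnK.
  by move=> [n [_ Yn]]; exists (n + m)%N; rewrite iterD leq_addl.
have muC m : mu (C m) = mu (C 0%N) by rewrite Cm (iter_pres hT).
have hC := nonincreasing_cvg_mu (mu := mu) (F := C) _ mC mBinf _.
have muB : mu Binf = mu (C 0%N).
  have h : (mu \o C) = cst (mu (C 0%N)) by apply/funext => m /=; rewrite muC.
  rewrite h in hC.
  have hC' : cst (mu (C 0%N)) @ \oo --> mu Binf.
    apply: hC.
      by rewrite (le_lt_trans (probability_le1 _ _))// ltry.
    move=> m n mn; apply/subsetPset => x /= [k [nk Yk]]; exists k; split => //; exact: leq_trans mn nk.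
  exact: (cvg_unique (@ereal_hausdorff R) hC' (cvg_cst _)).
have BT : T @^-1` Binf = Binf.
  apply/seteqP; split => x /=.
    move=> h m _; have [n [mn Yn]] := h m I.
    by exists n.+1; rewrite iterSr; split => //; apply: leqW.
  move=> h m _; have [[|n] [mn Yn]] := h m.+1 I; first by [].
  by exists n; rewrite -iterSr.
have muB1 : mu Binf = 1.
  have [B0|//] := herg _ mBinf BT.
  have : mu Y <= mu Binf.
    rewrite muB; apply: le_measure; rewrite ?inE//.
    by move=> x Yx; exists 0%N.
  by rewrite B0 => /(lt_le_trans Y0); rewrite ltxx.
pose W N := ~` U T N.+1 Y.
have mW N : measurable (W N) by apply: measurableC; exact: (U_meas hT).
have hW : mu (W 0%N) < +oo -> {homo W : n m / (n <= m)%N >-> (m <= n)%O} ->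
    (mu \o W) @ \oo --> mu (\bigcap_n W n).
  by move=> h1 h2; apply: nonincreasing_cvg_mu => //; exact: bigcapT_measurable.
suff h0 : mu (\bigcap_n W n) = 0.
  rewrite h0 in hW; apply: hW.
    by rewrite (le_lt_trans (probability_le1 _ _))// ltry.
  move=> m n mn; apply/subsetPset => x /= Wx [j [jm Yj]]; apply: Wx; exists j; split => //.
  by apply: leq_trans jm _.
  apply/eqP; rewrite eq_le measure_ge0 andbT.
  have -> : (0 : \bar R) = mu (~` Binf) by rewrite probability_setC// muB1 subee.
  apply: le_measure; rewrite ?inE//; first exact: bigcapT_measurable.
    exact: measurableC.
  move=> x Wx Bx; have [n [_ Yn]] := Bx 0%N I.
  by apply: (Wx n I); exists n; split.
Qed.

End erg.
Lemma rn_lower d (X : measurableType d) (R : realType) (mu nu : probability X R) :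
  nu `<< mu -> exists (Y : set X) (c : R),
  [/\ measurable Y, 0 < mu Y, (0 < c)%R &
      forall A, measurable A -> mu (A `&` Y) <= c%:E * nu A].
Proof.
move=> numu.
pose nu' := charge_of_finite_measure nu.
have numu' : nu' `<< mu by [].
pose f := Radon_Nikodym nu' mu.
have nuE A : measurable A -> nu A = \int[mu]_(x in A) f x.
  by move=> mA; exact: (Radon_Nikodym_integral numu' mA).
pose Ym m := setT `&` [set x | ((m.+1%:R)^-1)%:E < f x].
have mYm m : measurable (Ym m).
  apply: measurable_lte => //; apply: measurable_int; exact: (Radon_Nikodym_integrable numu').
have [m Ym0] : exists m, 0 < mu (Ym m).
  apply: contrapT => /forallNP h.
  have h0 m : mu (Ym m) = 0.
    by apply/eqP; rewrite eq_le measure_ge0 andbT leNgt; apply/negP/h.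
  pose Y0 := [set x | 0 < f x].
  have Y0U : Y0 = \bigcup_m Ym m.
    apply/seteqP; split => x /=.
      move=> fx0.
      have ffin : f x \is a fin_num by exact: Radon_Nikodym_fin_num.
      have fx0' : (0 < fine (f x))%R by rewrite -lte_fin fineK.
      have [N _ hN] := near_infty_natSinv_lt (PosNum fx0').
      exists N => //; split => //.
      by rewrite /= -(fineK ffin) lte_fin; exact: (hN N (leqnn N)).
    move=> [k _ [_ /= hk]]; apply: lt_trans hk.
    by rewrite lte_fin invr_gt0.
  have mY0 : measurable Y0 by rewrite Y0U; exact: bigcupT_measurable.
  have muY0 : mu Y0 = 0.
    apply: (negligibleP mu mY0).1; rewrite Y0U; apply: negligible_bigcup => k.
    exact: ((negligibleP mu (mYm k)).2 (h0 k)).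
  have nuY0 : nu Y0 = 0.
    by move/null_content_dominatesP : numu; apply.
  have : nu (~` Y0) <= 0.
    rewrite nuE; last exact: measurableC.
    have hD : forall x, (~` Y0) x -> 0 <= - f x.
      by move=> x /= /negP; rewrite -leNgt => fx; rewrite oppe_ge0.
    have := integral_ge0N mu hD.
    under eq_integral do rewrite oppeK.
    move=> ->; rewrite oppe_le0; exact: integral_ge0.
  rewrite probability_setC// nuY0 sube0 leNgt lte01.
  done.
exists (Ym m), (m.+1%:R); split => //.
move=> A mA.
have mAY : measurable (A `&` Ym m) by apply: measurableI.
have h1 : ((m.+1%:R)^-1)%:E * mu (A `&` Ym m) <= nu A.
  apply: (@le_trans _ _ (nu (A `&` Ym m))); last first.
    by apply: le_measure; rewrite ?inE //; apply: subIsetl.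
  rewrite nuE // -integral_cst //.
  apply: ge0_le_integral => //.
  - by move=> x _; rewrite lee_fin invr_ge0.
  - apply: (measurable_funS measurableT) => //; apply: measurable_int; exact: (Radon_Nikodym_integrable numu').
  - by move=> x [_ [_ hx]]; exact: ltW.
apply: (@le_trans _ _ ((m.+1%:R)%:E * (((m.+1%:R)^-1)%:E * mu (A `&` Ym m)))).
  by rewrite muleA -EFinM mulfV // mul1e.
by apply: lee_wpmul2l => //; rewrite lee_fin.
Qed.

Arguments erg_W {d X R mu T} hT herg Y _ _.

Lemma hit_le1 d (X : measurableType d) (T : X -> X) (A : set X) :
  hit_le T A 1 = T @^-1` A.
Proof.
apply/seteqP; split => x /=.
  move=> [n [/andP[n1 n1'] An]].
  have e : n = 1%N by apply/eqP; rewrite eqn_leq n1' n1.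
  by rewrite e in An.
by move=> Ax; exists 1%N.
Qed.

Theorem mainTheorem1 (d : measure_display) (X : measurableType d)
  (R : realType) (mu : probability X R) (T : X -> X)
  (hT : measure_preserving mu T) (herg : ergodic mu T)
  (E : nat -> set X) (hE : forall k, measurable (E k))
  (hpos : forall k, 0 < mu (E k)) :
  let a := (fun k => mu (E k)) @ \oo --> 0 in
  let b := forall nu : probability X R, nu `<< mu ->
             (fun k => nu (E k)) @ \oo --> 0 in
  let c := hit_cvg_infty_in_measure mu T E in
  let d' := forall nu : probability X R, nu `<< mu ->
             hit_cvg_infty_in_measure nu T E in
  let e := exists nu : probability X R, nu `<< mu /\
             hit_cvg_infty_in_measure nu T E in
  (a <-> b) /\ (a <-> c) /\ (a <-> d') /\ (a <-> e).
Proof.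
move=> a b c d' e.
have mH k N : measurable (hit_le T (E k) N).
  by rewrite hit_le_U; apply: (U_meas hT); exact: (pre_meas hT _ (hE k)).
have ac : a -> c.
  move=> ha N N1; apply/cvg0_ge0P => // eps e0.
  move/cvg0_ge0P : ha => /(_ (fun _ => measure_ge0 _ _)) ha.
  have N0 : (0 < N%:R :> R)%R by rewrite ltr0n.
  have := ha (eps / N%:R)%R (divr_gt0 e0 N0).
  apply: filterS => k hk.
  rewrite hit_le_U.
  apply: le_trans (U_le hT N _ (pre_meas hT _ (hE k))) _.
  rewrite hT.2 //.
  apply: le_trans (lee_wpmul2l _ hk) _; first by rewrite lee_fin ler0n.
  by rewrite -EFinM mulrC divfK // gt_eqF.
have ca : c -> a.
  move=> hc; have := hc 1%N isT.
  suff -> : (fun k => mu (hit_le T (E k) 1)) = (fun k => mu (E k)) by [].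
  by apply/funext => k; rewrite hit_le1 hT.2.
have ab : a -> b.
  by move=> ha nu numu; exact: (abs_cont_seq _ _ _ _ _ _ numu hE ha).
have ba : b -> a by move=> hb; apply: hb => A.
have ad : a -> d'.
  move=> ha nu numu N N1.
  exact: (abs_cont_seq _ _ _ _ _ _ numu (fun k => mH k N) (ac ha N N1)).
have de : d' -> e by move=> hd; exists mu; split; [move=> A|exact: hd].
have ea : e -> a.
  move=> [nu [numu hnu]].
  have [Y [cc [mY Y0 c0 hY]]] := rn_lower _ _ _ _ _ numu.
  apply/cvg0_ge0P => // eps e0.
  have e20 : (0 < eps / 2)%R by rewrite divr_gt0.
  have := erg_W hT herg Y mY Y0.
  move/cvg0_ge0P => /(_ (fun _ => measure_ge0 _ _)) /(_ _ e20) [N0 _ hN0].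
  have hN := hN0 N0 (leqnn N0).
  set del := (eps / 2 / (cc * N0.+1%:R))%R.
  have del0 : (0 < del)%R by rewrite divr_gt0 // mulr_gt0.
  have := hnu N0.+1 isT.
  move/cvg0_ge0P => /(_ (fun _ => measure_ge0 _ _)) /(_ _ del0).
  apply: filterS => k hk.
  apply: le_trans (key_ineq hT Y (E k) N0 mY (hE k)) _.
  rewrite (splitr eps) EFinD; apply: leeD => //.
  rewrite setIC.
  apply: le_trans (lee_wpmul2l _ (hY _ (mH k N0.+1))) _; first by rewrite lee_fin.
  apply: le_trans (lee_wpmul2l _ (lee_wpmul2l _ hk)) _.
  - by rewrite lee_fin.
  - by rewrite lee_fin ltW.
  rewrite -!EFinM lee_fin /del le_eqVlt; apply/orP; left; apply/eqP.
  field.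
  by rewrite gt_eqF // ?ltr0Sn // gt_eqF.
split; first by split.
split; first by split.
split; split.
- exact: ad.
- by move=> hd; apply: ea; apply: de.
- by move=> ha; apply: de; apply: ad.
- exact: ea.
Qed.
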